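(* Let $D_K$ be a relative $K$-entropy satisfying Properties (a), (b) and (c) below, and let $H_K$ be the associated conditional entropy, defined by one of the two forms below. Let $X=\{X_j\}$ be an arbitrary POVM on $\mathcal{H}_A$. Then for every density operator $\rho_{AB}$, $$H_K(X|B)\ge\log\frac{1}{c'(X)}+H_K(A|B),\qquad c'(X):=\max_j\mathrm{Tr}(X_j).$$
   Context: All Hilbert spaces are finite-dimensional; $\log$ has an arbitrary but fixed base. A relative $K$-entropy $D_K$ assigns to every pair $(S,T)$ of positive semidefinite operators on a common Hilbert space an extended real number $D_K(S\|T)$. Properties: (a) for every trace-preserving completely positive map (TPCPM) $\mathcal{E}$ (possibly between different spaces), $D_K(\mathcal{E}(S)\|\mathcal{E}(T))\le D_K(S\|T)$; (b) for positive semidefinite $S,T$ on $\mathcal{H}$ and $T'$ on $\mathcal{H}'$, $D_K(S\oplus 0\,\|\,T\oplus T')=D_K(S\|T)$; (c) for every constant $c>0$, $D_K(S\|cT)=D_K(S\|T)+\log\frac1c$. The conditional $K$-entropy of a density operator $\rho_{AB}$ is either $H_K(A|B)=-D_K(\rho_{AB}\|\mathbb{1}_A\otimes\rho_B)$ for all $\rho_{AB}$, or $H_K(A|B)=\max_{\sigma_B}[-D_K(\rho_{AB}\|\mathbb{1}_A\otimes\sigma_B)]$ for all $\rho_{AB}$, maximum over density operators $\sigma_B$. For a POVM $X=\{X_j\}$ on $\mathcal{H}_A$, let $\mathcal{X}:\rho_A\mapsto\sum_j|j\rangle\langle j|_X\,\mathrm{Tr}(X_j\rho_A)$ with $\{|j\rangle\}$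 orthonormal in a register $\mathcal{H}_X$; $H_K(X|B)$ denotes $H_K$ of the state $(\mathcal{X}\otimes\mathcal{I})(\rho_{AB})$ (register $X$ given $B$). *)

(* Defs.v *)
From mathcomp Require Import all_boot all_order all_algebra.
From mathcomp Require Import boolp classical_sets reals ereal exp sequences.
From mathcomp.real_closed Require Import complex mxtens.
Import Order.TTheory GRing.Theory Num.Theory.

Set Implicit Arguments.
Unset Strict Implicit.
Unset Printing Implicit Defensive.

Local Open Scope ring_scope.

Section QuantumDefs.
Variable R : realType.
Local Notation C := (R[i]).

Definition logb (b x : R) : R := ln x / ln b.

Definition adjmx m n (A : 'M[C]_(m, n)) : 'M[C]_(n, m) := (map_mx Num.conj A)^T.

(** Positive semidefinite operator on C^n (Hermitian with nonnegative
    quadratic form; in the numClosedField C, [0 <= z] means z is a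
    nonnegative real). *)
Definition psd n (A : 'M[C]_n) : Prop :=
  A = adjmx A /\ forall v : 'cV[C]_n, 0 <= (adjmx v *m A *m v) 0 0.

Definition density n (A : 'M[C]_n) : Prop := psd A /\ \tr A = 1.

(** Tensor-product convention: H_1 (x) H_2 with dims n1, n2 is C^(n1*n2),
    the basis vector e_i (x) e_j having index [mxtens_index (i, j)]
    (= i * n2 + j), consistent with the Kronecker product [tensmx]. *)

(** Block (a,b) of an operator X on H_n (x) C^k, i.e. the operator on H_n
    with X = sum_{a,b} blk X a b (x) |a><b|. *)
Definition blk n k (X : 'M[C]_(n * k)) (a b : 'I_k) : 'M[C]_n :=
  \matrix_(i, j) X (mxtens_index (i, a)) (mxtens_index (j, b)).

(** (E (x) id_k)(X) for a map E from operators on H_n to operators on H_m. *)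
Definition tens_id {n m} (k : nat) (E : 'M[C]_n -> 'M[C]_m) (X : 'M[C]_(n * k))
  : 'M[C]_(m * k) :=
  \matrix_(p, q)
    E (blk X (mxtens_unindex p).2 (mxtens_unindex q).2)
      (mxtens_unindex p).1 (mxtens_unindex q).1.


Definition tpcp n m (E : 'M[C]_n -> 'M[C]_m) : Prop :=
  [/\ forall (c : C) (X Y : 'M[C]_n), E (c *: X + Y) = c *: E X + E Y,
      forall X : 'M[C]_n, \tr (E X) = \tr X
    & forall (k : nat) (X : 'M[C]_(n * k)), psd X -> psd (@tens_id n m k E X)].

Definition relK_entropy (b : R)
  (D : forall n, 'M[C]_n -> 'M[C]_n -> \bar R) : Prop :=
  [/\
      forall n m (E : 'M[C]_n -> 'M[C]_m), tpcp E ->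
        forall S T : 'M[C]_n, psd S -> psd T ->
          (D m (E S) (E T) <= D n S T)%E,
      forall n m (S T : 'M[C]_n) (T' : 'M[C]_m), psd S -> psd T -> psd T' ->
        D (n + m) (block_mx S 0 0 0) (block_mx T 0 0 T') = D n S T
    &
      forall n (c : R) (S T : 'M[C]_n), 0 < c -> psd S -> psd T ->
        D n S ((real_complex R c) *: T) = (D n S T + (logb b (1 / c))%:E)%E].

Definition ptrA na nb (rho : 'M[C]_(na * nb)) : 'M[C]_nb :=
  \matrix_(j, l) \sum_(i < na) rho (mxtens_index (i, j)) (mxtens_index (i, l)).

(** Conditional K-entropy H_K(A|B) of rho_AB.
    [opt = true]  : H_K(A|B) = - D_K(rho_AB || 1_A (x) rho_B);
    [opt = false] : H_K(A|B) = max over density operators sigma_B of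
                    - D_K(rho_AB || 1_A (x) sigma_B)  (written as a supremum). *)
Definition condH (opt : bool) (D : forall n, 'M[C]_n -> 'M[C]_n -> \bar R)
  na nb (rho : 'M[C]_(na * nb)) : \bar R :=
  if opt then (- D _ rho (tensmx (1%:M : 'M[C]_na) (ptrA rho)))%E
  else ereal_sup ((fun sigma : 'M[C]_nb =>
                     (- D _ rho (tensmx (1%:M : 'M[C]_na) sigma))%E)
                  @` [set sigma | density sigma])%classic.

Definition POVM na k (X : 'I_k -> 'M[C]_na) : Prop :=
  (forall j, psd (X j)) /\ \sum_(j < k) X j = 1%:M.

Definition meas na k (X : 'I_k -> 'M[C]_na) (rhoA : 'M[C]_na) : 'M[C]_k :=
  \matrix_(j, j') ((j == j')%:R * \tr (X j *m rhoA)).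

(** c'(X) = max_j Tr(X_j) (the traces are nonnegative reals). *)
Definition cprime na k (X : 'I_k -> 'M[C]_na) : R :=
  \big[Num.max/0]_(j < k) complex.Re (\tr (X j)).

End QuantumDefs.
Arguments tens_id {R n m} k E X.

(* Main.v *)
Require Import Defs.
From mathcomp Require Import all_boot all_order all_algebra.
From mathcomp Require Import boolp classical_sets reals ereal exp sequences.
From mathcomp.real_closed Require Import complex mxtens.
From mathcomp Require Import ring.
Import Order.TTheory GRing.Theory Num.Theory.
Local Open Scope ring_scope.

Set Implicit Arguments.
Unset Strict Implicit.
Unset Printing Implicit Defensive.
Arguments mxtens_unindex : simpl never.
Arguments mxtens_index : simpl never.

Lemma sum_tens (V : nmodType) m n (F : 'I_(m*n) -> V) :
  \sum_(i < m*n) F i = \sum_(i < m) \sum_(j < n) F (mxtens_index (i,j)).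
Proof.
rewrite pair_big /= (reindex (@mxtens_index m n)) /=.
  by apply: eq_bigr => -[i j].
by exists (@mxtens_unindex m n) => x _; rewrite (mxtens_indexK, mxtens_unindexK).
Qed.

Section Q.
Variable R : realType.
Local Notation C := (R[i]).

Definition qf n (f : 'I_n -> C) (A : 'M[C]_n) :=
  \sum_i \sum_j (f i)^* * A i j * f j.

Lemma adjmxE m n (A : 'M[C]_(m,n)) i j : adjmx A i j = (A j i)^*.
Proof. by rewrite /adjmx !mxE. Qed.

Lemma qfE n (v : 'cV[C]_n) A : (adjmx v *m A *m v) 0 0 = qf (fun i => v i 0) A.
Proof.
rewrite /qf mxE; under eq_bigr do rewrite mxE mulr_suml.
rewrite exchange_big; apply: eq_bigr => i _; apply: eq_bigr => j _.
by rewrite adjmxE.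
Qed.

Lemma psdP n (A : 'M[C]_n) :
  psd A <-> (forall i j, A j i = (A i j)^*) /\ forall f, 0 <= qf f A.
Proof.
split.
  case=> hA hq; split.
    by move=> i j; rewrite {1}hA adjmxE.
  move=> f; have := hq (\col_i f i); rewrite qfE.
  suff -> : (fun i => (\col_j f j) i 0) = f by [].
  by apply: funext => i; rewrite mxE.
case=> hA hq; split.
  by apply/matrixP => i j; rewrite adjmxE hA.
by move=> v; rewrite qfE.
Qed.


Definition sf n (f g : 'I_n -> C) (A : 'M[C]_n) :=
  \sum_i \sum_j (f i)^* * A i j * g j.

Lemma qf_sf n f (A : 'M[C]_n) : qf f A = sf f f A.
Proof. by []. Qed.

Lemma sfD1 n (f1 f2 g : 'I_n -> C) (A : 'M[C]_n) :
  sf (fun a => f1 a + f2 a) g A = sf f1 g A + sf f2 g A.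
Proof.
rewrite /sf -big_split; apply: eq_bigr => i _; rewrite -big_split.
by apply: eq_bigr => j _; rewrite rmorphD /= !mulrDl.
Qed.

Lemma sfD2 n (f g1 g2 : 'I_n -> C) (A : 'M[C]_n) :
  sf f (fun a => g1 a + g2 a) A = sf f g1 A + sf f g2 A.
Proof.
rewrite /sf -big_split; apply: eq_bigr => i _; rewrite -big_split.
by apply: eq_bigr => j _; rewrite !mulrDr.
Qed.

Lemma sfZ1 n (c : C) (f g : 'I_n -> C) (A : 'M[C]_n) :
  sf (fun a => c * f a) g A = c^* * sf f g A.
Proof.
rewrite /sf mulr_sumr; apply: eq_bigr => i _; rewrite mulr_sumr.
by apply: eq_bigr => j _; rewrite rmorphM /= !mulrA.
Qed.

Lemma sfZ2 n (c : C) (f g : 'I_n -> C) (A : 'M[C]_n) :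
  sf f (fun a => c * g a) A = c * sf f g A.
Proof.
rewrite /sf mulr_sumr; apply: eq_bigr => i _; rewrite mulr_sumr.
by apply: eq_bigr => j _; rewrite mulrCA.
Qed.

Lemma sum_delta1 n (i : 'I_n) (F : 'I_n -> C) :
  \sum_j (j == i)%:R * F j = F i.
Proof.
rewrite (bigD1 i) //= eqxx mul1r big1 ?addr0 // => j /negbTE ->.
by rewrite mul0r.
Qed.

Lemma sum_delta2 n (i : 'I_n) (F : 'I_n -> C) :
  \sum_j F j * (j == i)%:R = F i.
Proof. by under eq_bigr do rewrite mulrC; rewrite sum_delta1. Qed.

Lemma sf_d1 n (i : 'I_n) g (A : 'M[C]_n) :
  sf (fun a => (a == i)%:R) g A = \sum_j A i j * g j.
Proof.
rewrite /sf; under eq_bigr => a _ do (under eq_bigr do rewrite rmorph_nat -mulrA;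
  rewrite -mulr_sumr).
by rewrite sum_delta1.
Qed.

Lemma sf_d2 n (j : 'I_n) f (A : 'M[C]_n) :
  sf f (fun a => (a == j)%:R) A = \sum_i (f i)^* * A i j.
Proof. by rewrite /sf; under eq_bigr do rewrite sum_delta2. Qed.

Lemma sf_conj n (f g : 'I_n -> C) (A : 'M[C]_n) : (forall i j, A j i = (A i j)^*) ->
  (sf f g A)^* = sf g f A.
Proof.
move=> hA; rewrite /sf rmorph_sum exchange_big; apply: eq_bigr => i _.
rewrite rmorph_sum; apply: eq_bigr => j _.
by rewrite !rmorphM /= conjCK -hA mulrC [f i * _]mulrC mulrA.
Qed.

Lemma psd_diag n (A : 'M[C]_n) i : psd A -> 0 <= A i i.
Proof.
case/psdP => _ /(_ (fun a => (a == i)%:R)).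
by rewrite qf_sf sf_d1 sum_delta2.
Qed.


Lemma psd_real n (A : 'M[C]_n) i : psd A -> (A i i)^* = A i i.
Proof. by move/(psd_diag i)/ger0_real/conj_Creal. Qed.

Lemma psd_row0 n (A : 'M[C]_n) i j : psd A -> A i i = 0 -> A i j = 0.
Proof.
move=> hA hii; have [-> //|nij] := eqVneq j i.
have hjj := psd_diag j hA; have hjr := psd_real j hA.
case/psdP: hA => hH hq.
apply/eqP; apply/negPn/negP => ha.
set a := A i j; set m := a * a^*.
have m0 : m != 0 by rewrite mul_conjC_eq0.
have mc : m^* = m by rewrite /m rmorphM /= conjCK mulrC.
set u := (A j j + 1) / m.
have uc : u^* = u by rewrite /u fmorph_div /= rmorphD /= rmorph1 hjr mc.
have := hq (fun l => (- a * u) * (l == i)%:R + (l == j)%:R).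
rewrite qf_sf sfD1 !sfD2 !sfZ1 !sfZ2 !sf_d1 !sum_delta2 hii -/a (hH i j) -/a.
rewrite !mulr0 add0r rmorphM rmorphN /= uc.
have hum : u * m = A j j + 1 by rewrite /u divfK.
have -> : - a^* * u * a + (- a * u * a^* + A j j) = - (u * m) - (u * m) + A j j.
  by rewrite /m; ring.
rewrite hum => h; have := addr_ge0 h hjj.
have -> : - (A j j + 1) - (A j j + 1) + A j j + A j j = - 2%:R by ring.
rewrite oppr_ge0 => h2.
have h0 : (0:C) < 2%:R by rewrite ltr0n.
by have := lt_le_trans h0 h2; rewrite ltxx.
Qed.


Lemma sfB_mx n (f g : 'I_n -> C) (A B : 'M[C]_n) :
  sf f g (A - B) = sf f g A - sf f g B.
Proof.
rewrite /sf -sumrB; apply: eq_bigr => i _; rewrite -sumrB.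
by apply: eq_bigr => j _; rewrite !mxE mulrBr mulrBl.
Qed.

Definition schur n (X : 'M[C]_n) i0 : 'M[C]_n :=
  \matrix_(a, b) (X a b - X a i0 * X i0 b / X i0 i0).

Lemma psd_schur n (X : 'M[C]_n) i0 : psd X -> X i0 i0 != 0 -> psd (schur X i0).
Proof.
move=> hX x0; have xr := psd_real i0 hX.
case/psdP: (hX) => hH hq; apply/psdP; split.
  move=> a b; rewrite !mxE rmorphB /= -hH fmorph_div /= rmorphM /= xr -!hH.
  by rewrite [X b i0 * _]mulrC.
move=> f.
set x := X i0 i0.
set beta := \sum_b X i0 b * f b.
set gam := \sum_a (f a)^* * X a i0.
have gb : gam = beta^*.
  by rewrite /beta /gam -sf_d1 sf_conj // sf_d2.
have -> : qf f (schur X i0) = qf f X - gam * beta / x.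
  rewrite !qf_sf.
  have -> : schur X i0 = X - \matrix_(a, b) (X a i0 * X i0 b / x).
    by apply/matrixP => a b; rewrite !mxE.
  rewrite sfB_mx; congr (_ - _).
  rewrite /sf /gam /beta !mulr_suml; apply: eq_bigr => a _.
  rewrite mulr_sumr mulr_suml; apply: eq_bigr => b _.
  by rewrite mxE; ring.
have := hq (fun l => f l + (- (beta / x)) * (l == i0)%:R).
rewrite qf_sf sfD1 !sfD2 !sfZ1 !sfZ2 !sf_d1 !sf_d2 -/beta -/gam.
rewrite sum_delta2 -/x -qf_sf.
rewrite rmorphN /= fmorph_div /= xr -gb.
rewrite -/x.
have -> : qf f X + - (beta / x) * gam +
 (- (gam / x) * beta + - (gam / x) * (- (beta / x) * x))
   = qf f X - gam * beta / x by field.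
by [].
Qed.


Lemma tr_psd_aux n (Z : 'M[C]_n) : psd Z -> forall d (X : 'M[C]_n), psd X ->
  (forall s t : 'I_n, (s < n - d)%N -> X s t = 0) ->
  0 <= \sum_s \sum_t X s t * Z t s.
Proof.
move=> hZ; elim=> [|d IH] X hX hrow.
  rewrite big1 // => s _; rewrite big1 // => t _.
  by rewrite hrow ?mul0r // subn0.
have [dn|nd] := ltnP d n; last first.
  apply: IH => // s t; rewrite (_ : n - d = 0)%N ?ltn0 //.
  by apply/eqP; rewrite subn_eq0.
have mn : (n - d.+1 < n)%N by rewrite ltn_subrL (leq_ltn_trans (leq0n _) dn).
set i0 := Ordinal mn.
have [x0|x0] := eqVneq (X i0 i0) 0.
  apply: IH => // s t hs.
  have [si|si] := ltnP s (n - d.+1); first exact: hrow.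
  have -> : s = i0.
    apply/val_inj => /=; apply/eqP; rewrite eqn_leq si andbT.
    by rewrite -ltnS (leq_trans hs) // -subSn // subSS.
  exact: psd_row0.
case/psdP: (hX) => hH _.
have hX' := psd_schur hX x0.
have := IH (schur X i0) hX'.
have hcol : forall s t : 'I_n, (t < n - d.+1)%N -> X s t = 0.
  by move=> s t ht; rewrite hH hrow // conjC0.
have -> : \sum_s \sum_t X s t * Z t s =
   \sum_s \sum_t schur X i0 s t * Z t s +
   (X i0 i0)^-1 * sf (fun t => X t i0) (fun t => X t i0) Z.
  have -> : sf (fun t => X t i0) (fun t => X t i0) Z =
      \sum_s \sum_t X s i0 * X i0 t * Z t s.
    rewrite /sf exchange_big; apply: eq_bigr => s _; apply: eq_bigr => t _.
    by rewrite -hH; ring.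
  rewrite mulr_sumr -big_split; apply: eq_bigr => s _.
  rewrite mulr_sumr -big_split; apply: eq_bigr => t _.
  by rewrite !mxE /=; field; exact: x0.
move=> h; apply: addr_ge0.
  apply: h => s t hs.
  rewrite mxE; have [si|si] := ltnP s (n - d.+1).
    rewrite (hrow s t) // (hrow s i0) //. ring.
  have -> : s = i0.
    apply/val_inj => /=; apply/eqP; rewrite eqn_leq si andbT.
    by rewrite -ltnS (leq_trans hs) // -subSn // subSS.
  by rewrite mulrC mulrA mulVf // mul1r subrr.
apply: mulr_ge0; first by rewrite invr_ge0 psd_diag.
by case/psdP: hZ => _; apply.
Qed.

Lemma tr_psd_ge0 n (X Z : 'M[C]_n) : psd X -> psd Z ->
  0 <= \sum_s \sum_t X s t * Z t s.
Proof.
move=> hX hZ; apply: (@tr_psd_aux n Z hZ n X hX) => s t.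
by rewrite subnn ltn0.
Qed.


Lemma sum_tens_delta m k (i : 'I_m) (F : 'I_(m*k) -> C) :
  (forall P, (mxtens_unindex P).1 != i -> F P = 0) ->
  \sum_P F P = \sum_b F (mxtens_index (i, b)).
Proof.
move=> hF; rewrite sum_tens (bigD1 i) //= [X in _ + X]big1 ?addr0 // => j hj.
by rewrite big1 // => b _; rewrite hF // mxtens_indexK.
Qed.

Definition dtens m k (w : 'I_m -> C) (s : 'M[C]_k) : 'M[C]_(m*k) :=
  \matrix_(p, q) (((mxtens_unindex p).1 == (mxtens_unindex q).1)%:R
     * w (mxtens_unindex p).1 * s (mxtens_unindex p).2 (mxtens_unindex q).2).

Lemma dtensE m k (w : 'I_m -> C) (s : 'M[C]_k) j b j' b' :
  dtens w s (mxtens_index (j, b)) (mxtens_index (j', b')) =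
  (j == j')%:R * w j * s b b'.
Proof. by rewrite mxE !mxtens_indexK. Qed.

Lemma psd_dtens m k (w : 'I_m -> C) (s : 'M[C]_k) :
  (forall j, 0 <= w j) -> psd s -> psd (dtens w s).
Proof.
move=> hw hs; have hs' := hs; case/psdP: hs' => hH hq; apply/psdP; split.
  move=> P Q; case: (mxtens_indexP P) => j b; case: (mxtens_indexP Q) => j' b'.
  rewrite !dtensE; have [<-|nj] := eqVneq j j'.
    by rewrite !rmorphM /= rmorph_nat (conj_Creal (ger0_real (hw j))) -hH.
  by rewrite !(mul0r, mulr0n) rmorph0.
move=> f; rewrite /qf.
have -> : \sum_P \sum_Q (f P)^* * dtens w s P Q * f Q =
   \sum_j w j * qf (fun b => f (mxtens_index (j, b))) s.
  rewrite sum_tens; apply: eq_bigr => j _; rewrite /qf mulr_sumr.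
  apply: eq_bigr => b _.
  rewrite (@sum_tens_delta _ _ j); last first.
    move=> Q hQ; rewrite mxE mxtens_indexK /= eq_sym (negbTE hQ).
    by rewrite !mul0r mulr0 mul0r.
  rewrite mulr_sumr; apply: eq_bigr => b' _.
  by rewrite dtensE eqxx mulr1n; ring.
apply: sumr_ge0 => j _; apply: mulr_ge0 => //.
Qed.

Lemma psd_ptrA na nb (rho : 'M[C]_(na * nb)) : psd rho -> psd (ptrA rho).
Proof.
case/psdP => hH hq; apply/psdP; split.
  move=> b b'; rewrite !mxE rmorph_sum; apply: eq_bigr => i _.
  exact: hH.
move=> f.
have -> : qf f (ptrA rho) = \sum_i \sum_b \sum_b'
     (f b)^* * rho (mxtens_index (i, b)) (mxtens_index (i, b')) * f b'.
  rewrite /qf; under eq_bigr => b _ do under eq_bigr => b' _ do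
    rewrite mxE mulr_sumr mulr_suml.
  by under eq_bigr do rewrite exchange_big; rewrite exchange_big.
apply: sumr_ge0 => i _.
have := hq (fun P => ((mxtens_unindex P).1 == i)%:R * f (mxtens_unindex P).2).
rewrite /qf (@sum_tens_delta _ _ i); last first.
  by move=> P hP; rewrite (negbTE hP) mul0r rmorph0 big1 // => Q _; rewrite !mul0r.
congr (_ <= _); apply: eq_bigr => b _.
rewrite (@sum_tens_delta _ _ i); last first.
  by move=> Q hQ; rewrite (negbTE hQ) mul0r mulr0.
apply: eq_bigr => b' _.
by rewrite !mxtens_indexK /= eqxx !mul1r.
Qed.


Lemma psd0 n : psd (0 : 'M[C]_n).
Proof.
apply/psdP; split; first by move=> i j; rewrite !mxE rmorph0.
by move=> f; rewrite /qf big1 // => i _; rewrite big1 // => j _; rewrite mxE mulr0 mul0r.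
Qed.

Lemma psd_scale n (c : C) (A : 'M[C]_n) : 0 <= c -> psd A -> psd (c *: A).
Proof.
move=> c0; case/psdP => hH hq; apply/psdP; split.
  by move=> i j; rewrite !mxE rmorphM /= (conj_Creal (ger0_real c0)) -hH.
move=> f; have -> : qf f (c *: A) = c * qf f A.
  rewrite /qf mulr_sumr; apply: eq_bigr => i _; rewrite mulr_sumr.
  by apply: eq_bigr => j _; rewrite mxE; ring.
exact: mulr_ge0.
Qed.

Lemma psd_block n m (A : 'M[C]_n) (B : 'M[C]_m) :
  psd A -> psd B -> psd (block_mx A 0 0 B).
Proof.
case/psdP => hA qA; case/psdP => hB qB; apply/psdP; split.
  move=> P Q; case: (split_ordP P) => i ->; case: (split_ordP Q) => j ->;
  by rewrite ?block_mxEul ?block_mxEur ?block_mxEdl ?block_mxEdr ?mxE ?rmorph0.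
move=> f.
have -> : qf f (block_mx A 0 0 B) =
    qf (fun i => f (lshift m i)) A + qf (fun j => f (rshift n j)) B.
  rewrite /qf sumr_add; congr (_ + _); apply: eq_bigr => i _;
    rewrite sumr_add ?block_mxEul ?block_mxEdr.
    rewrite [X in _ + X]big1 ?addr0; last by move=> j _; rewrite block_mxEur mxE mulr0 mul0r.
    by apply: eq_bigr => j _; rewrite block_mxEul.
  rewrite big1 ?add0r; last by move=> j _; rewrite block_mxEdl mxE mulr0 mul0r.
  by apply: eq_bigr => j _; rewrite block_mxEdr.
exact: addr_ge0.
Qed.


Section Meas.
Variables (na nb k : nat) (X : 'I_k -> 'M[C]_na).
Hypothesis hX : POVM X.

Local Notation M := (tens_id nb (meas X)).

Lemma MEu (Z : 'M[C]_(na * nb)) p q :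
  M Z p q = ((mxtens_unindex p).1 == (mxtens_unindex q).1)%:R *
    \sum_s \sum_t X (mxtens_unindex p).1 s t *
       Z (mxtens_index (t, (mxtens_unindex p).2))
         (mxtens_index (s, (mxtens_unindex q).2)).
Proof.
rewrite /tens_id mxE /meas mxE /mxtrace; congr (_ * _).
apply: eq_bigr => s _; rewrite mxE; apply: eq_bigr => t _.
by rewrite /blk mxE.
Qed.

Lemma ME (Z : 'M[C]_(na * nb)) j b j' b' :
  M Z (mxtens_index (j, b)) (mxtens_index (j', b')) = (j == j')%:R *
    \sum_s \sum_t X j s t * Z (mxtens_index (t, b)) (mxtens_index (s, b')).
Proof. by rewrite MEu !mxtens_indexK. Qed.

Lemma povm_sum (W : 'M[C]_na) :
  \sum_j \sum_s \sum_t X j s t * W t s = \sum_s W s s.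
Proof.
have h1 : forall s t, \sum_j X j s t = (s == t)%:R.
  move=> s t; case: hX => _ hs; rewrite -summxE hs mxE.
  by case: (s == t).
rewrite exchange_big; apply: eq_bigr => s _.
rewrite exchange_big (bigD1 s) //= -big_distrl /= h1 eqxx mul1r.
rewrite big1 ?addr0 // => t /negbTE ht.
by rewrite -big_distrl /= h1 eq_sym ht mul0r.
Qed.

Lemma tr_M (Z : 'M[C]_(na * nb)) : \tr (M Z) = \tr Z.
Proof.
rewrite /mxtrace !sum_tens exchange_big /= [RHS]exchange_big /=.
apply: eq_bigr => b _.
set W := \matrix_(t, s) Z (mxtens_index (t, b)) (mxtens_index (s, b)).
transitivity (\sum_j \sum_s \sum_t X j s t * W t s); last first.
  by rewrite povm_sum; apply: eq_bigr => s _; rewrite mxE.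
apply: eq_bigr => j _; rewrite ME eqxx mul1r; apply: eq_bigr => s _.
by apply: eq_bigr => t _; rewrite mxE.
Qed.

Lemma ptrA_M (Z : 'M[C]_(na * nb)) : ptrA (M Z) = ptrA Z.
Proof.
apply/matrixP => b b'; rewrite !mxE.
set W := \matrix_(t, s) Z (mxtens_index (t, b)) (mxtens_index (s, b')).
transitivity (\sum_j \sum_s \sum_t X j s t * W t s); last first.
  by rewrite povm_sum; apply: eq_bigr => s _; rewrite mxE.
apply: eq_bigr => j _; rewrite ME eqxx mul1r; apply: eq_bigr => s _.
by apply: eq_bigr => t _; rewrite mxE.
Qed.

Lemma M_lin (c : C) (Z1 Z2 : 'M[C]_(na * nb)) :
  M (c *: Z1 + Z2) = c *: M Z1 + M Z2.
Proof.
apply/matrixP => p q; rewrite MEu [RHS]mxE [in RHS]mxE !MEu.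
rewrite mulrCA -mulrDr; congr (_ * _).
rewrite mulr_sumr -big_split; apply: eq_bigr => s _.
rewrite mulr_sumr -big_split; apply: eq_bigr => t _.
by rewrite !mxE /=; ring.
Qed.

End Meas.


Lemma split_l n m (i : 'I_n) : split (lshift m i) = inl i.
Proof. exact: (@unsplitK n m (inl i)). Qed.
Lemma split_r n m (i : 'I_m) : split (rshift n i) = inr i.
Proof. exact: (@unsplitK n m (inr i)). Qed.

Lemma sum_rpart n m k' (F : 'I_((n + m) * k') -> C) :
  (forall i a, F (mxtens_index (lshift m i, a)) = 0) ->
  \sum_P F P = \sum_q \sum_a F (mxtens_index (rshift n q, a)).
Proof.
move=> hF; rewrite sum_tens sumr_add big1 ?add0r // => i _.
by rewrite big1 // => a _; apply: hF.
Qed.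

Lemma sum_lpart n1 n2 m k' (F : 'I_((n1 * n2 + m) * k') -> C) :
  (forall q a, F (mxtens_index (rshift (n1 * n2) q, a)) = 0) ->
  \sum_P F P = \sum_t \sum_b \sum_a F (mxtens_index (lshift m (mxtens_index (t, b)), a)).
Proof.
move=> hF; rewrite sum_tens sumr_add [X in _ + X]big1 ?addr0.
  by rewrite sum_tens.
by move=> q _; rewrite big1 // => a _; apply: hF.
Qed.

Lemma pull2 (I1 I2 J : finType) (G : I1 -> I2 -> J -> C) :
  \sum_(i1 : I1) \sum_(i2 : I2) \sum_(j : J) G i1 i2 j =
  \sum_(j : J) \sum_(i1 : I1) \sum_(i2 : I2) G i1 i2 j.
Proof. by under eq_bigr do rewrite exchange_big; rewrite exchange_big. Qed.

Lemma pull3 (I1 I2 I3 J : finType) (G : I1 -> I2 -> I3 -> J -> C) :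
  \sum_(i1 : I1) \sum_(i2 : I2) \sum_(i3 : I3) \sum_(j : J) G i1 i2 i3 j =
  \sum_(j : J) \sum_(i1 : I1) \sum_(i2 : I2) \sum_(i3 : I3) G i1 i2 i3 j.
Proof. by under eq_bigr do rewrite pull2; rewrite exchange_big. Qed.

Lemma pull4 (I1 I2 I3 I4 J : finType) (G : I1 -> I2 -> I3 -> I4 -> J -> C) :
  \sum_(i1 : I1) \sum_(i2 : I2) \sum_(i3 : I3) \sum_(i4 : I4) \sum_(j : J) G i1 i2 i3 i4 j =
  \sum_(j : J) \sum_(i1 : I1) \sum_(i2 : I2) \sum_(i3 : I3) \sum_(i4 : I4) G i1 i2 i3 i4 j.
Proof. by under eq_bigr do rewrite pull3; rewrite exchange_big. Qed.

Lemma tpcp_psd n m (E : 'M[C]_n -> 'M[C]_m) (Y : 'M[C]_n) :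
  tpcp E -> psd Y -> psd (E Y).
Proof.
case=> _ _ hcp hY.
pose Y1 : 'M[C]_(n * 1) :=
  \matrix_(P, Q) Y (mxtens_unindex P).1 (mxtens_unindex Q).1.
have hY1 : psd Y1.
  case/psdP: hY => hH hq; apply/psdP; split.
    by move=> P Q; rewrite !mxE hH.
  move=> g; have := hq (fun p => g (mxtens_index (p, ord0))).
  rewrite /qf sum_tens; congr (_ <= _); apply: eq_bigr => p _.
  rewrite big_ord1 sum_tens; apply: eq_bigr => q _.
  by rewrite big_ord1 mxE !mxtens_indexK.
have EY : forall p q, E Y p q =
    tens_id 1 E Y1 (mxtens_index (p, ord0)) (mxtens_index (q, ord0)).
  move=> p q; rewrite /tens_id mxE !mxtens_indexK /=.
  congr (E _ p q); apply/matrixP => x y.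
  by rewrite /blk !mxE !mxtens_indexK.
case/psdP: (hcp 1%N Y1 hY1) => hH hq; apply/psdP; split.
  by move=> p q; rewrite !EY hH.
move=> f; have := hq (fun P => f (mxtens_unindex P).1).
rewrite /qf sum_tens; congr (_ <= _); apply: eq_bigr => p _.
rewrite big_ord1 sum_tens; apply: eq_bigr => q _.
by rewrite big_ord1 !mxtens_indexK EY.
Qed.

Lemma ge0_ReC (z : C) : 0 <= z -> z = (complex.Re z)%:C%C.
Proof.
move=> h; apply/eqP; rewrite eq_complex /= eqxx /=.
by rewrite (ger0_Im h).
Qed.

Section Fmap.
Variables (na nb k : nat) (X : 'I_k -> 'M[C]_na).
Hypothesis hX : POVM X.
Local Notation M := (tens_id nb (meas X)).

Definition Fm (Y : 'M[C]_(na * nb + k * nb)) : 'M[C]_(k * nb) :=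
  M (ulsubmx Y) + drsubmx Y.

Lemma GE k' (Y : 'M[C]_((na * nb + k * nb) * k')) p a q a' :
  tens_id k' Fm Y (mxtens_index (p, a)) (mxtens_index (q, a')) =
  M (ulsubmx (blk Y a a')) p q +
  Y (mxtens_index (rshift _ p, a)) (mxtens_index (rshift _ q, a')).
Proof.
rewrite {1}/tens_id mxE !mxtens_indexK /= /Fm [LHS]mxE; congr (_ + _).
by rewrite /blk !mxE.
Qed.

Lemma GE2 k' (Y : 'M[C]_((na * nb + k * nb) * k')) j b a j' b' a' :
  tens_id k' Fm Y (mxtens_index (mxtens_index (j, b), a))
                  (mxtens_index (mxtens_index (j', b'), a')) =
  (j == j')%:R * (\sum_s \sum_t X j s t *
     Y (mxtens_index (lshift _ (mxtens_index (t, b)), a))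
       (mxtens_index (lshift _ (mxtens_index (s, b')), a'))) +
  Y (mxtens_index (rshift _ (mxtens_index (j, b)), a))
    (mxtens_index (rshift _ (mxtens_index (j', b')), a')).
Proof.
rewrite GE ME; congr (_ * _ + _); apply: eq_bigr => s _; apply: eq_bigr => t _.
by rewrite /blk !mxE.
Qed.

Lemma X_herm j s t : X j t s = (X j s t)^*.
Proof. by case: hX => /(_ j) /psdP [h _] _; apply: h. Qed.

Lemma G_herm k' (Y : 'M[C]_((na * nb + k * nb) * k')) : psd Y ->
  forall P Q, tens_id k' Fm Y Q P = (tens_id k' Fm Y P Q)^*.
Proof.
case/psdP => hH _ P Q.
case: (mxtens_indexP P) => p a; case: (mxtens_indexP Q) => q a'.
case: (mxtens_indexP p) => j b; case: (mxtens_indexP q) => j' b'.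
rewrite !GE2 rmorphD rmorphM /= rmorph_nat -hH; congr (_ + _).
have [<-|nj] := eqVneq j j'; last first.
  by rewrite !(mul0r, mulr0n).
rewrite rmorph_sum exchange_big; congr (_ * _); apply: eq_bigr => s _.
rewrite rmorph_sum; apply: eq_bigr => t _.
by rewrite rmorphM /= -hH -X_herm.
Qed.

Definition Q1 k' (Y : 'M[C]_((na * nb + k * nb) * k')) (f : 'I_(k * nb * k') -> C) :=
  \sum_j \sum_b \sum_a \sum_b' \sum_a'
    (f (mxtens_index (mxtens_index (j, b), a)))^* *
    (\sum_s \sum_t X j s t *
     Y (mxtens_index (lshift _ (mxtens_index (t, b)), a))
       (mxtens_index (lshift _ (mxtens_index (s, b')), a'))) *
    f (mxtens_index (mxtens_index (j, b'), a')).

Definition Q2 k' (Y : 'M[C]_((na * nb + k * nb) * k')) (f : 'I_(k * nb * k') -> C) :=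
  \sum_p \sum_a \sum_q \sum_a'
    (f (mxtens_index (p, a)))^* *
     Y (mxtens_index (rshift _ p, a)) (mxtens_index (rshift _ q, a')) *
    f (mxtens_index (q, a')).

Lemma qfG k' (Y : 'M[C]_((na * nb + k * nb) * k')) f :
  qf f (tens_id k' Fm Y) = Q1 Y f + Q2 Y f.
Proof.
rewrite /qf sum_tens.
have -> : Q1 Y f = \sum_p \sum_a \sum_q \sum_a'
    (f (mxtens_index (p, a)))^* * M (ulsubmx (blk Y a a')) p q *
    f (mxtens_index (q, a')).
  rewrite /Q1 sum_tens; apply: eq_bigr => j _; apply: eq_bigr => b _.
  apply: eq_bigr => a _; rewrite (@sum_tens_delta _ _ j); last first.
    move=> q hq; rewrite big1 // => a' _.
    by rewrite MEu mxtens_indexK /= eq_sym (negbTE hq) !(mul0r, mulr0n, mulr0).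
  apply: eq_bigr => b' _; apply: eq_bigr => a' _.
  rewrite ME eqxx mul1r; congr (_ * _ * _).
  by apply: eq_bigr => s _; apply: eq_bigr => t _; rewrite /blk !mxE.
rewrite /Q2 -big_split; apply: eq_bigr => p _; rewrite -big_split.
apply: eq_bigr => a _; rewrite sum_tens -big_split; apply: eq_bigr => q _.
rewrite -big_split; apply: eq_bigr => a' _; rewrite GE /=; ring.
Qed.

Lemma Q2_ge0 k' (Y : 'M[C]_((na * nb + k * nb) * k')) f : psd Y -> 0 <= Q2 Y f.
Proof.
case/psdP => _ hq.
pose g := fun P : 'I_((na * nb + k * nb) * k') =>
  match split (mxtens_unindex P).1 with
  | inl _ => 0 | inr q => f (mxtens_index (q, (mxtens_unindex P).2)) end.
have gl : forall i a, g (mxtens_index (lshift _ i, a)) = 0.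
  by move=> i a; rewrite /g mxtens_indexK /= split_l.
have gr : forall q a, g (mxtens_index (rshift _ q, a)) = f (mxtens_index (q, a)).
  by move=> q a; rewrite /g mxtens_indexK split_r.
have := hq g; rewrite /qf (sum_rpart (n := na * nb)); last first.
  by move=> i a; rewrite big1 // => Q _; rewrite gl rmorph0 !mul0r.
congr (_ <= _); apply: eq_bigr => p _; apply: eq_bigr => a _.
rewrite (sum_rpart (n := na * nb)); last first.
  by move=> i a'; rewrite gl mulr0.
by apply: eq_bigr => q _; apply: eq_bigr => a' _; rewrite !gr.
Qed.

Definition Zm k' (Y : 'M[C]_((na * nb + k * nb) * k')) (f : 'I_(k * nb * k') -> C) j
  : 'M[C]_na := \matrix_(t, s) \sum_b \sum_a \sum_b' \sum_a'
    (f (mxtens_index (mxtens_index (j, b), a)))^* *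
     Y (mxtens_index (lshift _ (mxtens_index (t, b)), a))
       (mxtens_index (lshift _ (mxtens_index (s, b')), a')) *
    f (mxtens_index (mxtens_index (j, b'), a')).

Lemma sum2_mul (c d : C) (F : 'I_na -> 'I_na -> C) :
  c * (\sum_s \sum_t F s t) * d = \sum_s \sum_t c * F s t * d.
Proof.
rewrite mulr_sumr mulr_suml; apply: eq_bigr => s _.
by rewrite mulr_sumr mulr_suml.
Qed.

Lemma Q1E k' (Y : 'M[C]_((na * nb + k * nb) * k')) f :
  Q1 Y f = \sum_j \sum_s \sum_t X j s t * Zm Y f j t s.
Proof.
rewrite /Q1; apply: eq_bigr => j _.
under eq_bigr => b _ do under eq_bigr => a _ do under eq_bigr => b' _ do
  under eq_bigr => a' _ do rewrite sum2_mul.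
rewrite pull4; under eq_bigr => s _ do rewrite pull4.
apply: eq_bigr => s _; apply: eq_bigr => t _; rewrite mxE.
rewrite mulr_sumr; apply: eq_bigr => b _; rewrite mulr_sumr; apply: eq_bigr => a _.
rewrite mulr_sumr; apply: eq_bigr => b' _; rewrite mulr_sumr; apply: eq_bigr => a' _.
ring.
Qed.

Lemma psd_Zm k' (Y : 'M[C]_((na * nb + k * nb) * k')) f j : psd Y -> psd (Zm Y f j).
Proof.
case/psdP => hH hq; apply/psdP; split.
  move=> t s; rewrite !mxE.
  rewrite pull2; under eq_bigr => b' _ do rewrite pull2.
  rewrite rmorph_sum; apply: eq_bigr => b' _; rewrite rmorph_sum; apply: eq_bigr => a' _.
  rewrite rmorph_sum; apply: eq_bigr => b _; rewrite rmorph_sum; apply: eq_bigr => a _.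
  by rewrite !rmorphM /= conjCK -hH; ring.
move=> h.
pose g := fun P : 'I_((na * nb + k * nb) * k') =>
  match split (mxtens_unindex P).1 with
  | inl i => h (mxtens_unindex i).1 *
      f (mxtens_index (mxtens_index (j, (mxtens_unindex i).2), (mxtens_unindex P).2))
  | inr _ => 0 end.
have gl : forall t b a, g (mxtens_index (lshift _ (mxtens_index (t, b)), a)) =
    h t * f (mxtens_index (mxtens_index (j, b), a)).
  by move=> t b a; rewrite /g mxtens_indexK split_l mxtens_indexK.
have gr : forall q a, g (mxtens_index (rshift _ q, a)) = 0.
  by move=> q a; rewrite /g mxtens_indexK split_r.
have inner : forall P, \sum_Q (g P)^* * Y P Q * g Q =
    \sum_s \sum_b' \sum_a' (g P)^* *
      Y P (mxtens_index (lshift _ (mxtens_index (s, b')), a')) *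
      (h s * f (mxtens_index (mxtens_index (j, b'), a'))).
  move=> P; rewrite (@sum_lpart na nb (k * nb)); last first.
    by move=> q a; rewrite gr mulr0.
  by apply: eq_bigr => s _; apply: eq_bigr => b' _; apply: eq_bigr => a' _; rewrite gl.
have := hq g; rewrite /qf; under eq_bigr do rewrite inner.
rewrite (@sum_lpart na nb (k * nb)); last first.
  by move=> q a; rewrite gr rmorph0; under eq_bigr do under eq_bigr do
    under eq_bigr do rewrite !mul0r; rewrite big1 // => s _; rewrite big1 // => b' _; rewrite big1.
under eq_bigr => t _ do rewrite pull2.
congr (_ <= _); apply: eq_bigr => t _; apply: eq_bigr => s _.
rewrite mxE mulr_sumr mulr_suml; apply: eq_bigr => b _.
rewrite mulr_sumr mulr_suml; apply: eq_bigr => a _.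
rewrite mulr_sumr mulr_suml; apply: eq_bigr => b' _.
rewrite mulr_sumr mulr_suml; apply: eq_bigr => a' _.
by rewrite gl rmorphM; ring.
Qed.

Lemma Fm_tpcp : tpcp Fm.
Proof.
split.
- move=> c Y1 Y2; rewrite /Fm.
  have -> : ulsubmx (c *: Y1 + Y2) = c *: ulsubmx Y1 + ulsubmx Y2.
    by apply/matrixP => i j; rewrite !mxE.
  have -> : drsubmx (c *: Y1 + Y2) = c *: drsubmx Y1 + drsubmx Y2.
    by apply/matrixP => i j; rewrite !mxE.
  by rewrite M_lin // scalerDr addrACA.
- by move=> Y; rewrite mxtraceD tr_M // -[in RHS](submxK Y) mxtrace_block.
- move=> k' Y hY; apply/psdP; split; first exact: G_herm.
  move=> f; rewrite qfG; apply: addr_ge0; last exact: Q2_ge0.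
  rewrite Q1E; apply: sumr_ge0 => j _; apply: tr_psd_ge0.
    by case: hX.
  exact: psd_Zm.
Qed.

Lemma tens1_dtens m (sig : 'M[C]_nb) :
  tensmx (1%:M : 'M[C]_m) sig = dtens (fun _ => 1) sig.
Proof. by apply/matrixP => P Q; rewrite !mxE mulr1. Qed.

Lemma M_T0 (sig : 'M[C]_nb) :
  M (tensmx (1%:M : 'M[C]_na) sig) = dtens (fun j => \tr (X j)) sig.
Proof.
apply/matrixP => P Q; case: (mxtens_indexP P) => j b; case: (mxtens_indexP Q) => j' b'.
rewrite ME dtensE -mulrA; congr (_ * _).
rewrite /mxtrace mulr_suml; apply: eq_bigr => s _.
rewrite (bigD1 s) //= big1 ?addr0; last first.
  by move=> t /negbTE ht; rewrite tensmxE mxE ht mul0r mulr0.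
by rewrite tensmxE mxE eqxx mulr1n mul1r.
Qed.

Lemma Fm_l (Z : 'M[C]_(na * nb)) : Fm (block_mx Z 0 0 0) = M Z.
Proof. by rewrite /Fm block_mxKul block_mxKdr addr0. Qed.

Lemma Fm_r (Z : 'M[C]_(na * nb)) (W : 'M[C]_(k * nb)) :
  Fm (block_mx Z 0 0 W) = M Z + W.
Proof. by rewrite /Fm block_mxKul block_mxKdr. Qed.

Lemma trX_ge0 j : 0 <= \tr (X j).
Proof. by apply: sumr_ge0 => s _; apply: psd_diag; case: hX. Qed.

Lemma trX_le j : complex.Re (\tr (X j)) <= cprime X.
Proof. exact: le_bigmax. Qed.

Lemma core (b : R) (D : forall n, 'M[C]_n -> 'M[C]_n -> \bar R)
  (hD : relK_entropy b D) (rho : 'M[C]_(na * nb)) (sig : 'M[C]_nb) :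
  psd rho -> psd sig -> 0 < cprime X ->
  (D _ (M rho) (tensmx (1%:M : 'M[C]_k) sig) + (logb b (1 / cprime X))%:E
     <= D _ rho (tensmx (1%:M : 'M[C]_na) sig))%E.
Proof.
move=> hr hs c0; case: hD => hDa hDb hDc.
set c := cprime X.
have hT0 : psd (tensmx (1%:M : 'M[C]_na) sig).
  by rewrite tens1_dtens; apply: psd_dtens => // j; rewrite ler01.
have hT0' : psd (tensmx (1%:M : 'M[C]_k) sig).
  by rewrite tens1_dtens; apply: psd_dtens => // j; rewrite ler01.
have hMr : psd (M rho).
  by rewrite -Fm_l; apply: tpcp_psd; [exact: Fm_tpcp | exact: psd_block hr (psd0 _)].
set T' := dtens (fun j => real_complex R c - \tr (X j)) sig.
have hT' : psd T'.
  apply: psd_dtens => // j; rewrite (ge0_ReC (trX_ge0 j)) -rmorphB /=.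
  by rewrite ler0c subr_ge0 trX_le.
have E2 : Fm (block_mx (tensmx (1%:M : 'M[C]_na) sig) 0 0 T') =
    real_complex R c *: tensmx (1%:M : 'M[C]_k) sig.
  rewrite Fm_r M_T0 tens1_dtens; apply/matrixP => P Q; rewrite !mxE; ring.
rewrite -(hDc _ _ _ _ c0 hMr hT0') -E2 -Fm_l.
rewrite -(hDb _ _ rho (tensmx (1%:M : 'M[C]_na) sig) T') //.
apply: hDa; first exact: Fm_tpcp.
  exact: psd_block hr (psd0 _).
exact: psd_block.
Qed.

End Fmap.




End Q.

Unset Implicit Arguments.
Set Strict Implicit.

Lemma ereal_flip (R : realType) (A B : \bar R) (l : R) :
  (A + l%:E <= B)%E -> (l%:E + - B <= - A)%E.
Proof.
move=> h; by rewrite addeC -leeBrDr // -fin_num_oppeD // leeN2.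
Qed.

Theorem lemma3 (R : realType) (b : R) (hb : 1 < b)
  (D : forall n, 'M[R[i]]_n -> 'M[R[i]]_n -> \bar R)
  (hD : relK_entropy b D) (opt : bool)
  (na nb k : nat) (X : 'I_k -> 'M[R[i]]_na) (hX : POVM X)
  (rho : 'M[R[i]]_(na * nb)) (hrho : density rho) :
  ((logb b (1 / cprime X))%:E + condH opt D rho
     <= condH opt D (tens_id nb (meas X) rho))%E.
Proof.
have hr : psd rho by case: hrho.
have c0 : 0 < cprime X.
  rewrite ltNge; apply/negP => hc.
  have hna : (0 < na)%N.
    rewrite lt0n; apply/negP => /eqP na0; subst na.
    case: hrho => _; rewrite /mxtrace big1 ?(@oner_eq0 R[i]) //.
      by move=> /esym /eqP; rewrite oner_eq0.
    by move=> [i hi] _; exfalso; move: hi; rewrite mul0n ltn0.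
  have h1 : \sum_j \tr (X j) = na%:R.
    by case: hX => _ hs; rewrite -raddf_sum /= hs mxtrace1.
  have h2 : \sum_j \tr (X j) <= 0.
    apply: sumr_le0 => j _; rewrite (ge0_ReC (trX_ge0 hX j)).
    rewrite -(rmorph0 (real_complex R)) lecR.
    exact: le_trans (trX_le X j) hc.
  have : (0 : R[i]) < na%:R by rewrite ltr0n.
  by rewrite -h1 => /lt_le_trans /(_ h2); rewrite ltxx.
case: opt; rewrite /condH /=.
  rewrite (ptrA_M hX); apply: ereal_flip.
  by have := core hX hD hr (psd_ptrA hr) c0.
rewrite addeC -leeBrDr //; apply: ge_ereal_sup => x [sig hsig <-].
rewrite leeBrDr // addeC.
apply: le_trans; last first.
  by apply: ereal_sup_ubound; exists sig.
apply: ereal_flip; case: hsig => hs _.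
by have := core hX hD hr hs c0.
Qed.
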